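(* Every graph $G$ with $n\geq 3$ vertices that has no $K_5$-minor satisfies $c(G)\leq 8(n-2)$.
   Context: All graphs are finite, simple and undirected. A graph $H$ is a minor of $G$ if $H$ can be obtained from a subgraph of $G$ by contracting edges. A clique of a graph $G$ is a (possibly empty) set of pairwise adjacent vertices; $c(G)$ denotes the number of cliques of $G$ (including the empty clique, all single vertices and all edges). *)

(* Defs.v *)
From mathcomp Require Import all_boot.
Set Implicit Arguments. Unset Strict Implicit. Unset Printing Implicit Defensive.

Definition simple_graph (T : finType) (e : rel T) : Prop :=
  symmetric e /\ irreflexive e.

Definition is_clique (T : finType) (e : rel T) (A : {set T}) : bool :=
  [forall x in A, forall y in A, (x != y) ==> e x y].

(* c(G): number of cliques, including the empty clique. *)
Definition num_cliques (T : finType) (e : rel T) : nat :=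
  #|[set A : {set T} | is_clique e A]|.

(* B induces a connected subgraph of G (B nonempty is required separately). *)
Definition connected_in (T : finType) (e : rel T) (B : {set T}) : bool :=
  [forall x in B, forall y in B,
     connect (fun u v => [&& e u v, u \in B & v \in B]) x y].

(* This is the standard equivalent of "obtained from a subgraph by
   contracting edges". *)
Definition is_minor (U : finType) (f : rel U) (T : finType) (e : rel T) : Prop :=
  exists phi : U -> {set T},
    [/\ forall u, phi u != set0,
        forall u, connected_in e (phi u),
        forall u v, u != v -> [disjoint phi u & phi v] &
        forall u v, f u v -> exists x, exists y, [/\ x \in phi u, y \in phi v & e x y]].

Definition complete_rel (n : nat) : rel 'I_n := fun i j => i != j.

Definition has_K5_minor (T : finType) (e : rel T) : Prop :=
  is_minor (@complete_rel 5) e.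

(* Main.v *)
Require Import Defs.
From mathcomp Require Import all_boot zify.
Set Implicit Arguments. Unset Strict Implicit. Unset Printing Implicit Defensive.


Section G.
Variable T : finType.
Implicit Types (e : rel T) (V : {set T}).

Definition nb e V x := [set y in V | e x y].
Definition deg e V x := #|nb e V x|.
Definition sdeg e V := \sum_(x in V) deg e V x.
Definition ctr e v w : rel T := fun x y =>
  (x != y) && [|| e x y, (x == v) && e w y | (y == v) && e x w].
Definition edel e a b : rel T := fun x y =>
  e x y && ~~ (((x == a) && (y == b)) || ((x == b) && (y == a))).
Definition minor_in k V e := exists phi : 'I_k -> {set T},
  [/\ forall u, phi u != set0, forall u, phi u \subset V,
      forall u, connected_in e (phi u),
      forall u v, u != v -> [disjoint phi u & phi v] &
      forall u v, u != v -> exists x y, [/\ x \in phi u, y \in phi v & e x y]].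
Definition ncl e V := #|[set A : {set T} | (A \subset V) && is_clique e A]|.

Lemma minor_mono k V V' e : V \subset V' -> minor_in k V e -> minor_in k V' e.
Proof.
move=> sVV' [phi [h1 h2 h3 h4 h5]]; exists phi; split=> // u.
exact: subset_trans (h2 u) sVV'.
Qed.

Lemma minor_sub k V e e2 : (forall x y, e x y -> e2 x y) ->
  minor_in k V e -> minor_in k V e2.
Proof.
move=> se [phi [h1 h2 h3 h4 h5]]; exists phi; split=> //.
- move=> u; apply/forall_inP=> x xB; apply/forall_inP=> y yB.
  have := h3 u => /forall_inP/(_ x xB)/forall_inP/(_ y yB) H.
  apply: (connect_sub _ H) => a b /and3P [eab aB bB].
  by apply: connect1; rewrite /= se // aB bB.
- move=> u v uv; have [x [y [? ? ?]]] := h5 u v uv; exists x, y; split=> //.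
  exact: se.
Qed.

Lemma minor1 V e c : c \in V -> minor_in 1 V e.
Proof.
move=> cV; exists (fun _ => [set c]); split.
- by move=> _; apply/set0Pn; exists c; rewrite set11.
- by move=> _; rewrite sub1set.
- move=> _; apply/forall_inP=> x; rewrite inE => /eqP->.
  by apply/forall_inP=> y; rewrite inE => /eqP->.
- by move=> u v; rewrite !ord1.
- by move=> u v; rewrite !ord1.
Qed.

Lemma minor_apex k V e v : symmetric e -> irreflexive e -> v \in V ->
  minor_in k (nb e V v) e -> minor_in k.+1 V e.
Proof.
move=> sym irr vV [phi [h1 h2 h3 h4 h5]].
pose psi (i : 'I_k.+1) := if unlift ord0 i is Some j then phi j else [set v].
have vnot j : v \notin phi j.
  by apply/negP=> /(subsetP (h2 j)); rewrite inE irr andbF.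
exists psi; split.
- move=> i; rewrite /psi; case: unliftP => [j _|_]; first exact: h1.
  by apply/set0Pn; exists v; rewrite set11.
- move=> i; rewrite /psi; case: unliftP => [j _|_]; last by rewrite sub1set.
  by apply: subset_trans (h2 j) _; apply/subsetP=> x; rewrite inE => /andP[].
- move=> i; rewrite /psi; case: unliftP => [j _|_]; first exact: h3.
  apply/forall_inP=> x; rewrite inE => /eqP->.
  by apply/forall_inP=> y; rewrite inE => /eqP->.
- move=> i i'; rewrite /psi; case: unliftP => [j ->|->];
    case: unliftP => [j' ->|->] //.
  + by move=> ne; apply: h4; apply: contraNneq ne => ->.
  + by move=> _; rewrite disjoint_sym disjoints1.
  + by move=> _; rewrite disjoints1.
- move=> i i'; rewrite /psi; case: unliftP => [j ->|->];
    case: unliftP => [j' ->|->] //.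
  + by move=> ne; apply: h5; apply: contraNneq ne => ->.
  + move=> _; have /set0Pn [x xj] := h1 j; exists x, v; split=> //.
    * by rewrite set11.
    * by have := subsetP (h2 j) x xj; rewrite inE sym => /andP[].
  + move=> _; have /set0Pn [x xj] := h1 j'; exists v, x; split=> //.
    * by rewrite set11.
    * by have := subsetP (h2 j') x xj; rewrite inE => /andP[].
Qed.

End G.


Section G2.
Variable T : finType.
Implicit Types (e : rel T) (V : {set T}).

Lemma minor_ctr k V e v w : symmetric e -> e v w -> w \in V ->
  minor_in k (V :\ w) (ctr e v w) -> minor_in k V e.
Proof.
move=> sym evw wV [phi [h1 h2 h3 h4 h5]].
pose psi u := if v \in phi u then w |: phi u else phi u.
have wnot u : w \notin phi u.
  by apply/negP=> /(subsetP (h2 u)); rewrite !inE eqxx.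
have sub u : phi u \subset psi u.
  by rewrite /psi; case: ifP => _ //; apply: subsetUr.
have inpsi u x : x \in psi u -> x \in phi u \/ (x = w /\ v \in phi u).
  rewrite /psi; case: ifP => vin; last by left.
  by rewrite !inE => /orP[/eqP->|]; [right|left].
exists psi; split.
- move=> u; apply/set0Pn; have /set0Pn [x xu] := h1 u; exists x.
  exact: (subsetP (sub u)).
- move=> u; rewrite /psi; case: ifP => _.
  + rewrite subUset sub1set wV /=; apply: subset_trans (h2 u) _.
    by apply/subsetP=> x; rewrite inE => /andP[].
  + by apply: subset_trans (h2 u) _; apply/subsetP=> x; rewrite inE => /andP[].
- move=> u.
  set R := (fun a b : T => [&& e a b, a \in psi u & b \in psi u]).
  have symR : symmetric R.
    by move=> a b; rewrite /R sym; case: (a \in psi u); case: (b \in psi u);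
       rewrite ?andbF ?andbT.
  have csym : connect_sym R by apply: sym_connect_sym.
  have step : forall a b, [&& ctr e v w a b, a \in phi u & b \in phi u] ->
      connect R a b.
    move=> a b /and3P [cab au bu].
    have au' := subsetP (sub u) a au; have bu' := subsetP (sub u) b bu.
    move: cab; rewrite /ctr => /andP [_ /or3P [eab|/andP[/eqP av ewb]|/andP[/eqP bv eaw]]].
    + by apply: connect1; rewrite /R eab au' bu'.
    + have wu : w \in psi u by rewrite /psi -av au setU11.
      apply: (connect_trans (y:=w)); apply: connect1; rewrite /R ?au' ?bu' wu //.
      * by rewrite av evw.
      * by rewrite ewb.
    + have wu : w \in psi u by rewrite /psi -bv bu setU11.
      apply: (connect_trans (y:=w)); apply: connect1; rewrite /R ?au' ?bu' wu //.
      * by rewrite eaw.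
      * by rewrite bv sym evw.
  have lift a b : a \in phi u -> b \in phi u -> connect R a b.
    move=> au bu; have := h3 u => /forall_inP/(_ a au)/forall_inP/(_ b bu) H.
    exact: (connect_sub step H).
  have rep x : x \in psi u -> exists2 x', x' \in phi u & connect R x x'.
    move=> xu; case: (inpsi u x xu) => [xin|[xw vin]].
      by exists x => //; apply: connect0.
    exists v => //; apply: connect1; rewrite /R xu xw sym evw /=.
    exact: (subsetP (sub u)).
  apply/forall_inP=> x xu; apply/forall_inP=> y yu.
  have [x' x'u cx] := rep x xu; have [y' y'u cy] := rep y yu.
  apply: (connect_trans cx); apply: (connect_trans (lift _ _ x'u y'u)).
  by rewrite csym.
- move=> u u' uu'; have d := h4 u u' uu'.
  rewrite -setI_eq0; apply/eqP/setP=> x; rewrite !inE.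
  apply/andP=> [[xu xu']].
  case: (inpsi u x xu) => [a|[xw va]]; case: (inpsi u' x xu') => [b|[xw' vb]].
  + by move: (disjointFl d b); rewrite a.
  + by move: a; rewrite xw' (negbTE (wnot u)).
  + by move: b; rewrite xw (negbTE (wnot u')).
  + by move: (disjointFl d vb); rewrite va.
- move=> u u' uu'; have [x [y [xu yu cxy]]] := h5 u u' uu'.
  have xu' := subsetP (sub u) x xu; have yu' := subsetP (sub u') y yu.
  move: cxy; rewrite /ctr => /andP [_ /or3P [exy|/andP[/eqP xv ewy]|/andP[/eqP yv exw]]].
  + by exists x, y.
  + exists w, y; split=> //; by rewrite /psi -xv xu setU11.
  + exists x, w; split=> //; by rewrite /psi -yv yu setU11.
Qed.

End G2.


Section G3.
Variable T : finType.
Implicit Types (e : rel T) (V : {set T}).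

Lemma sum_ind (A : {pred T}) (P : pred T) :
  \sum_(x in A) (P x : nat) = #|[set x in A | P x]|.
Proof.
rewrite -sum1dep_card big_mkcondr /=; apply: eq_bigr => x _; by case: (P x).
Qed.

Lemma card_le1 (A : {pred T}) a : #|[set x in A | x == a]| <= 1.
Proof.
rewrite -(cards1 a); apply: subset_leq_card; apply/subsetP=> x.
by rewrite !inE => /andP[].
Qed.

Lemma le_card_sub (A B : {set T}) : A \subset B -> #|A| <= #|B|.
Proof. exact: subset_leq_card. Qed.

Lemma ctr_sym e v w : symmetric e -> symmetric (ctr e v w).
Proof.
move=> sym x y; rewrite /ctr (eq_sym x y); congr (_ && _).
rewrite (sym x y) (sym y w) (sym x w).
by case: (e y x); case: (x == v); case: (e w y); case: (y == v); case: (e w x).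
Qed.

Lemma ctr_irr e v w : irreflexive (ctr e v w).
Proof. by move=> x; rewrite /ctr eqxx. Qed.

Lemma edel_sym e a b : symmetric e -> symmetric (edel e a b).
Proof.
move=> sym x y; rewrite /edel sym; congr (_ && ~~ _).
by case: (x == a); case: (y == b); case: (x == b); case: (y == a).
Qed.

Lemma edel_irr e a b : irreflexive e -> irreflexive (edel e a b).
Proof. by move=> irr x; rewrite /edel irr. Qed.

Lemma edel_sub e a b x y : edel e a b x y -> e x y.
Proof. by case/andP. Qed.

Lemma deg_le e V x : irreflexive e -> x \in V -> deg e V x < #|V|.
Proof.
move=> irr xV; apply: proper_card; apply/properP; split.
  by apply/subsetP=> y; rewrite inE => /andP[].
by exists x => //; rewrite inE irr andbF.
Qed.

Lemma sdeg_le e V : irreflexive e -> sdeg e V <= #|V| * #|V|.-1.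
Proof.
move=> irr; rewrite /sdeg -sum_nat_const; apply: leq_sum => x xV.
by have := deg_le irr xV; lia.
Qed.

Lemma sdeg_avg e V k : (forall x, x \in V -> k <= deg e V x) -> k * #|V| <= sdeg e V.
Proof.
move=> h; rewrite mulnC -sum_nat_const; exact: leq_sum.
Qed.

Lemma low_deg e V k : sdeg e V < k * #|V| -> exists2 x, x \in V & deg e V x < k.
Proof.
move=> h; case: (boolP [exists x in V, deg e V x < k]).
  by case/exists_inP=> x ? ?; exists x.
move/exists_inPn=> H; move: h; rewrite ltnNge sdeg_avg //.
by move=> x /H; rewrite -leqNgt.
Qed.

Lemma nb_nb e V v w : nb e (nb e V v) w = nb e V v :&: nb e V w.
Proof. by apply/setP=> y; rewrite !inE; case: (y \in V); case: (e v y). Qed.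

Lemma sdeg_del e V v : symmetric e -> irreflexive e -> v \in V ->
  sdeg e V = sdeg e (V :\ v) + 2 * deg e V v.
Proof.
move=> sym irr vV; rewrite /sdeg (big_setD1 v vV) /=.
have -> : \sum_(x in V :\ v) deg e V x =
          \sum_(x in V :\ v) (deg e (V :\ v) x + e x v).
  apply: eq_bigr => x xV; rewrite /deg (cardsD1 v) addnC; congr (_ + _).
    by apply: eq_card => y; rewrite !inE; case: (y == v).
  by rewrite inE vV.
rewrite big_split /= sum_ind.
have -> : #|[set x in V :\ v | e x v]| = deg e V v.
  apply: eq_card => y; rewrite !inE sym.
  by case: eqP=> [->|]; rewrite ?irr ?andbF //.
lia.
Qed.

Lemma sdeg_ctr e V v w : symmetric e -> irreflexive e -> v \in V -> w \in V ->
  e v w ->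
  sdeg e V <= sdeg (ctr e v w) (V :\ w) + 2 + 2 * #|nb e V v :&: nb e V w|.
Proof.
move=> sym irr vV wV evw.
have vw : v != w by apply: contraTneq evw => ->; rewrite irr.
set C := nb e V v :&: nb e V w.
set e' := ctr e v w.
have vV' : v \in V :\ w by rewrite !inE vw.
have wV' : w \in V :\ v by rewrite !inE eq_sym vw.
rewrite /sdeg (big_setD1 v vV) (big_setD1 w wV') (big_setD1 v vV') /=.
have -> : V :\ v :\ w = V :\ w :\ v.
  by apply/setP=> y; rewrite !inE; case: (y == v); case: (y == w).
have hx : forall x, x \in V :\ w :\ v ->
    deg e V x <= deg e' (V :\ w) x + (x \in C).
  move=> x xS; have /and3P [xv xw xV] : [&& x != v, x != w & x \in V] by move: xS; rewrite !inE.
  have xC : (x \in C) = e x v && e x w by rewrite !inE xV !(sym _ x) /=.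
  rewrite xC /deg.
  have Hs : forall y, y \in nb e V x -> y != w -> y \in nb e' (V :\ w) x.
    move=> y; rewrite !inE => /andP[yV exy] yw.
    have xy : x != y by apply: contraTneq exy => ->; rewrite irr.
    by rewrite yw yV /e' /ctr xy exy.
  case exw: (e x w); last first.
    rewrite andbF addn0; apply: subset_leq_card; apply/subsetP=> y yN.
    apply: Hs => //; apply: contraTneq yN => ->; by rewrite inE exw andbF.
  case exv: (e x v).
    apply: leq_trans (_ : #|w |: nb e' (V :\ w) x| <= _).
      apply: subset_leq_card; apply/subsetP=> y yN.
      rewrite !inE; case: (boolP (y == w)) => //= yw.
      by have := Hs y yN yw; rewrite !inE yw.
    by rewrite cardsU1 addnC leq_add2l; case: (_ \notin _).
  rewrite addn0.
  have vN' : v \in nb e' (V :\ w) x.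
    by rewrite !inE vw vV /e' /ctr xv exw eqxx !orbT.
  rewrite [X in _ <= X](cardsD1 v) vN'.
  apply: leq_trans (_ : #|w |: (nb e' (V :\ w) x :\ v)| <= _).
    apply: subset_leq_card; apply/subsetP=> y yN.
    rewrite !inE; case: (boolP (y == w)) => //= yw.
    have := Hs y yN yw; rewrite !inE => /andP[/andP[_ ->] ->]; rewrite andbT.
    by rewrite andbT; apply: contraTneq yN => ->; rewrite inE exv andbF.
  by rewrite cardsU1 leq_add2r; case: (_ \notin _).
have hvw : deg e V v + deg e V w <= deg e' (V :\ w) v + 2 + #|C|.
  set A := nb e V v :\ w; set B := nb e V w :\ v.
  have hA : deg e V v <= #|A| + 1.
    by rewrite /deg (cardsD1 w) addnC leq_add2l leq_b1.
  have hB : deg e V w <= #|B| + 1.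
    by rewrite /deg (cardsD1 v) addnC leq_add2l leq_b1.
  have hU : #|A :|: B| <= deg e' (V :\ w) v.
    apply: subset_leq_card; apply/subsetP=> y.
    rewrite !inE /e' /ctr eqxx /= => /orP[/and3P[yw yV evy]|/and3P[yv yV ewy]].
      by rewrite yw yV /= evy andbT; apply: contraTneq evy => <-; rewrite irr.
    rewrite yV ewy orbT (eq_sym v y) yv !andbT; apply: contraTneq ewy => ->; by rewrite irr.
  have hI : #|A :&: B| <= #|C|.
    apply: subset_leq_card; apply/subsetP=> y; rewrite !inE.
    by case/andP=> /and3P[_ -> ->] /and3P[_ _ ->].
  have := cardsUI A B; lia.
have hs : \sum_(x in V :\ w :\ v) deg e V x <=
          \sum_(x in V :\ w :\ v) deg e' (V :\ w) x + #|C|.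
  apply: leq_trans (_ : \sum_(x in V :\ w :\ v) (deg e' (V :\ w) x + (x \in C)) <= _).
    exact: leq_sum.
  rewrite big_split /= leq_add2l sum_ind; apply: subset_leq_card.
  by apply/subsetP=> y; rewrite inE => /andP[].
lia.
Qed.

Lemma sdeg_edel e V a b : symmetric e -> irreflexive e -> a \in V -> b \in V ->
  e a b -> sdeg (edel e a b) V < sdeg e V /\ sdeg e V <= sdeg (edel e a b) V + 2.
Proof.
move=> sym irr aV bV eab.
have ab : a != b by apply: contraTneq eab => ->; rewrite irr.
set e2 := edel e a b.
have sub x : nb e2 V x \subset nb e V x.
  by apply/subsetP=> y; rewrite !inE => /andP[-> /edel_sub ->].
split.
  rewrite /sdeg (big_setD1 a aV) [X in _ < X](big_setD1 a aV) /=.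
  rewrite -addSn; apply: leq_add; last by apply: leq_sum => x _; apply: subset_leq_card.
  apply: proper_card; apply/properP; split=> //; exists b.
    by rewrite inE bV eab.
  by rewrite inE bV /e2 /edel eab !eqxx.
have hx x : x \in V -> deg e V x <= deg e2 V x + ((x == a) + (x == b)).
  move=> xV; rewrite /deg.
  apply: leq_trans (_ : #|(nb e2 V x :|: [set y | (x == a) && (y == b)]) :|:
                          [set y | (x == b) && (y == a)]| <= _).
    apply: subset_leq_card; apply/subsetP=> y; rewrite !inE => /andP[yV exy].
    rewrite yV /e2 /edel exy /=.
    by case: (x == a); case: (y == b); case: (x == b); case: (y == a).
  apply: leq_trans (leq_card_setU _ _) _; rewrite addnA leq_add //.
    apply: leq_trans (leq_card_setU _ _) _; rewrite leq_add2l.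
    case: (x == a); last by rewrite leqn0 cards_eq0; apply/eqP/setP=> y; rewrite !inE.
    apply: leq_trans (_ : _ <= #|[set b]|) _; last by rewrite cards1.
    by apply: subset_leq_card; apply/subsetP=> y; rewrite !inE.
  case: (x == b); last by rewrite leqn0 cards_eq0; apply/eqP/setP=> y; rewrite !inE.
  apply: leq_trans (_ : _ <= #|[set a]|) _; last by rewrite cards1.
    by apply: subset_leq_card; apply/subsetP=> y; rewrite !inE.
rewrite /sdeg; apply: leq_trans (_ : \sum_(x in V) (deg e2 V x + ((x == a) + (x == b))) <= _).
  exact: leq_sum.
rewrite big_split big_split /= !sum_ind.
have := card_le1 V a; have := card_le1 V b; lia.
Qed.

End G3.


Section G4.
Variable T : finType.
Implicit Types (e : rel T) (V : {set T}).

Lemma sdeg0 e V : ~~ [exists v in V, exists w in V, e v w] -> sdeg e V = 0.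
Proof.
move/exists_inPn=> h; rewrite /sdeg big1 // => x xV; apply/eqP; rewrite cards_eq0.
apply/eqP/setP=> y; rewrite !inE; have := h x xV => /exists_inPn/(_ y).
by case: (y \in V) => //= /(_ isT) /negbTE.
Qed.

Lemma tri_minor e V v w c : symmetric e -> irreflexive e -> v \in V -> w \in V ->
  e v w -> c \in nb e V v :&: nb e V w -> minor_in 3 V e.
Proof.
move=> sym irr vV wV evw cC.
apply: (minor_apex sym irr vV); apply: (minor_apex sym irr (v := w)).
  by rewrite inE wV evw.
apply: minor1; rewrite nb_nb; exact: cC.
Qed.

Lemma lemA m : forall e V, #|V| = m -> symmetric e -> irreflexive e -> 1 <= m ->
  ~ minor_in 3 V e -> sdeg e V + 2 <= 2 * m.
Proof.
elim: m => [//|m IH] e V cV sym irr _ nm.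
case: (boolP [exists v in V, exists w in V, e v w]); last first.
  by move/sdeg0=> ->; lia.
case/exists_inP=> v vV /exists_inP [w wV evw].
have C0 : #|nb e V v :&: nb e V w| = 0.
  apply/eqP; rewrite cards_eq0.
  case: (boolP (nb e V v :&: nb e V w == set0)) => // /set0Pn [c cC].
  exfalso; apply: nm; exact: (tri_minor sym irr vV wV evw cC).
have vw : v != w by apply: contraTneq evw => ->; rewrite irr.
have cV' : #|V :\ w| = m by move: cV; rewrite (cardsD1 w) wV; lia.
have m1 : 1 <= m.
  rewrite -cV' card_gt0; apply/set0Pn; exists v; by rewrite !inE vw.
have := IH (ctr e v w) (V :\ w) cV' (ctr_sym v w sym) (ctr_irr e v w) m1
  (fun h => nm (minor_ctr sym evw wV h)).
have := sdeg_ctr sym irr vV wV evw; rewrite C0; lia.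
Qed.

Lemma lemB m : forall e V, #|V| = m -> symmetric e -> irreflexive e -> 2 <= m ->
  ~ minor_in 4 V e -> sdeg e V + 6 <= 4 * m.
Proof.
elim: m => [//|m IH] e V cV sym irr m2 nm.
case: (boolP [exists v in V, exists w in V, e v w]); last first.
  by move/sdeg0=> ->; lia.
case/exists_inP=> v vV /exists_inP [w wV evw].
have [m1|m3] : m = 1 \/ 2 <= m by lia.
  by have := sdeg_le V irr; rewrite cV m1 /=; lia.
set H := nb e V v.
have wH : w \in H by rewrite inE wV evw.
have H1 : 1 <= #|H| by rewrite card_gt0; apply/set0Pn; exists w.
have nH : ~ minor_in 3 H e by move=> h; apply: nm; exact: minor_apex sym irr vV h.
have hA := lemA (erefl #|H|) sym irr H1 nH.
have [w' w'H dw'] : exists2 w', w' \in H & deg e H w' < 2.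
  apply: low_deg; lia.
move: (w'H); rewrite inE => /andP [w'V evw'].
have vw : v != w' by apply: contraTneq evw' => ->; rewrite irr.
have cV' : #|V :\ w'| = m by move: cV; rewrite (cardsD1 w') w'V; lia.
have := IH (ctr e v w') (V :\ w') cV' (ctr_sym v w' sym) (ctr_irr e v w') m3
  (fun h => nm (minor_ctr sym evw' w'V h)).
have := sdeg_ctr sym irr vV w'V evw'.
move: dw'; rewrite /deg nb_nb; lia.
Qed.

Lemma nbhd_contra e V v w0 : symmetric e -> irreflexive e -> v \in V ->
  ~ minor_in 5 V e -> w0 \in nb e V v -> deg e V v <= 5 ->
  (forall w, w \in nb e V v -> 3 <= #|nb e V v :&: nb e V w|) -> False.
Proof.
move=> sym irr vV nm w0H dv h3.
have nH : ~ minor_in 4 (nb e V v) e by move=> h; apply: nm; exact: minor_apex sym irr vV h.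
have H2 : 2 <= #|(nb e V v)|.
  have := h3 _ w0H; have := subset_leq_card (subsetIl (nb e V v) (nb e V w0)); lia.
have hB := lemB (erefl #|(nb e V v)|) sym irr H2 nH.
have hd : 3 * #|(nb e V v)| <= sdeg e (nb e V v).
  by apply: sdeg_avg => x xH; rewrite /deg nb_nb; apply: h3.
move: dv; rewrite /deg; lia.
Qed.

Lemma edge_of_sdeg e V : 0 < sdeg e V -> exists a b, [/\ a \in V, b \in V & e a b].
Proof.
move=> h; case: (boolP [exists v in V, exists w in V, e v w]).
  by case/exists_inP=> a aV /exists_inP [b bV eab]; exists a, b.
by move/sdeg0=> h0; move: h; rewrite h0.
Qed.

Lemma lemC m : forall e V, #|V| = m -> symmetric e -> irreflexive e -> 3 <= m ->
  ~ minor_in 5 V e -> sdeg e V + 12 <= 6 * m.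
Proof.
elim: m => [//|m IH] e0 V cV sym0 irr0 m3' nm0.
have [m2|m3] : m = 2 \/ 3 <= m by lia.
  by have := sdeg_le V irr0; rewrite cV m2 /=; lia.
suff: forall n e, sdeg e V < n -> symmetric e -> irreflexive e ->
    ~ minor_in 5 V e -> sdeg e V + 12 <= 6 * m.+1.
  by move=> H; apply: (H (sdeg e0 V).+1).
elim=> [//|n IHn] e lt sym irr nm.
rewrite leqNgt; apply/negP=> big.
case: (leqP (6 * m.+1 - 9) (sdeg e V)) => hs.
  have [a [b [aV bV eab]]] : exists a b, [/\ a \in V, b \in V & e a b].
    apply: edge_of_sdeg; lia.
  have [lt2 le2] := sdeg_edel sym irr aV bV eab.
  have := IHn (edel e a b) (leq_trans lt2 (ltnSE lt)) (edel_sym a b sym)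
    (edel_irr a b irr) (fun h => nm (minor_sub (@edel_sub _ e a b) h)).
  lia.
have [v vV dv] : exists2 v, v \in V & deg e V v < 6 by apply: low_deg; lia.
have cVv : #|V :\ v| = m by move: cV; rewrite (cardsD1 v) vV; lia.
have := IH e (V :\ v) cVv sym irr m3
  (fun h => nm (minor_mono (subsetDl V [set v]) h)).
have := sdeg_del sym irr vV => eqd ih.
have [w0 w0H] : exists w0, w0 \in nb e V v.
  apply/set0Pn; rewrite -card_gt0; rewrite /deg in eqd; lia.
apply: (nbhd_contra sym irr vV nm w0H) => [|w wH]; first lia.
move: (wH); rewrite inE => /andP [wV evw].
have cV' : #|V :\ w| = m by move: cV; rewrite (cardsD1 w) wV; lia.
have := IH (ctr e v w) (V :\ w) cV' (ctr_sym v w sym) (ctr_irr e v w) m3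
  (fun h => nm (minor_ctr sym evw wV h)).
have := sdeg_ctr sym irr vV wV evw; lia.
Qed.

End G4.


Section G5.
Variable T : finType.
Implicit Types (e : rel T) (V : {set T}).

Lemma cliqueP e (A : {set T}) :
  reflect (forall x y, x \in A -> y \in A -> x != y -> e x y) (is_clique e A).
Proof.
apply: (iffP forall_inP) => [h x y xA yA xy|h x xA].
  by have := h x xA => /forall_inP/(_ y yA)/implyP; apply.
by apply/forall_inP=> y yA; apply/implyP; apply: h.
Qed.

Lemma ncl_pow e V : ncl e V <= 2 ^ #|V|.
Proof.
rewrite /ncl -card_powerset; apply: subset_leq_card; apply/subsetP=> A.
by rewrite !inE ?powersetE => /andP[].
Qed.

Lemma ncl_iso e V v : v \in V -> nb e V v = set0 -> ncl e V <= ncl e (V :\ v) + 1.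
Proof.
move=> vV nb0; rewrite /ncl -(cards1 [set v]).
apply: leq_trans (leq_card_setU _ _); apply: subset_leq_card; apply/subsetP=> A.
rewrite !inE => /andP [AV /cliqueP cA].
case: (boolP (v \in A)) => vA; last first.
  apply/orP; left; apply/andP; split; last by apply/cliqueP.
  apply/subsetP=> x xA; rewrite !inE (subsetP AV x xA) andbT.
  by apply: contraNneq vA => <-.
apply/orP; right; apply/eqP; apply/eqP; rewrite eqEsubset sub1set vA andbT.
apply/subsetP=> x xA; rewrite inE; apply/negPn/negP=> xv.
have : x \in nb e V v by rewrite inE (subsetP AV x xA) cA // eq_sym.
by rewrite nb0 inE.
Qed.

Lemma ncl_ctr e V v w : symmetric e -> irreflexive e -> v \in V -> w \in V ->
  e v w -> #|nb e V v :&: nb e V w| <= 2 ->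
  ncl e V <= ncl (ctr e v w) (V :\ w) + 8.
Proof.
move=> sym irr vV wV evw Csmall.
have vw : v != w by apply: contraTneq evw => ->; rewrite irr.
set C := nb e V v :&: nb e V w.
set e' := ctr e v w.
set S := v |: C.
set K := [set A : {set T} | (A \subset V) && is_clique e A].
set K' := [set A : {set T} | (A \subset V :\ w) && is_clique e' A].
set K1 := [set A in K | w \notin A].
set K2a := [set A in K | (w \in A) && (A :\ w \subset S)].
set K2b := [set A in K | (w \in A) && ~~ (A :\ w \subset S)].
have hK : #|K| <= #|K1| + #|K2a| + #|K2b|.
  apply: leq_trans (_ : #|K1 :|: K2a :|: K2b| <= _).
    apply: subset_leq_card; apply/subsetP=> A AK; move: (AK); rewrite !inE => /andP [-> ->] /=.
    by case: (w \in A); case: (A :\ w \subset S).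
  apply: leq_trans (leq_card_setU _ _) _; rewrite leq_add2r.
  exact: leq_card_setU.
have h2a : #|K2a| <= 8.
  apply: leq_trans (_ : #|[set A :\ w | A in K2a]| <= _).
    rewrite card_in_imset // => A B; rewrite !inE => /andP[_ /andP[wA _]]
      /andP[_ /andP[wB _]] eAB.
    by rewrite -(setD1K wA) -(setD1K wB) eAB.
  apply: leq_trans (_ : #|powerset S| <= _).
    apply: subset_leq_card; apply/subsetP=> B /imsetP [A AK ->].
    by rewrite powersetE; move: AK; rewrite !inE => /andP[_ /andP[_ ->]].
  rewrite card_powerset (_ : 8 = 2 ^ 3) //; apply: leq_pexp2l => //.
  by rewrite /S cardsU1; exact: (leq_add (leq_b1 _) Csmall).
pose f (A : {set T}) := v |: (A :\ w).
have h2bfacts : forall A, A \in K2b ->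
    [/\ A \subset V, is_clique e A, w \in A, v \notin A &
        exists2 c, c \in A :\ w & ~~ e v c /\ c != v].
  move=> A; rewrite !inE => /andP [/andP [AV clA] /andP [wA nS]].
  have ex : exists2 c, c \in A :\ w & c \notin S by apply/subsetPn.
  case: ex => c cA cS.
  move: (cA); rewrite !inE => /andP [cw cA'].
  have ewc : e w c by move/cliqueP: clA; apply => //; rewrite eq_sym.
  have cv : c != v by apply: contraNneq cS => ->; rewrite !inE eqxx.
  have nevc : ~~ e v c.
    apply: contraNN cS => evc; rewrite !inE (subsetP AV c cA') evc ewc.
    by rewrite orbT.
  split=> //; last by exists c => //; rewrite !inE cw cA'.
  apply/negP=> vA; move/negP: nS; apply; apply/subsetP=> x.
  rewrite !inE => /andP [xw xA]; case: eqP => //= /eqP xv.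
  rewrite (subsetP AV x xA).
  move/cliqueP: clA => cl.
  by rewrite (cl v x vA xA) 1?eq_sym // (cl w x wA xA) 1?eq_sym.
have hf : {in K2b &, injective f}.
  move=> A B /h2bfacts [_ _ wA vA _] /h2bfacts [_ _ wB vB _] eAB.
  have : (f A) :\ v = (f B) :\ v by rewrite eAB.
  rewrite /f !setU1K; last 2 first.
  - by rewrite !inE negb_and vB orbT.
  - by rewrite !inE negb_and vA orbT.
  by move=> h; rewrite -(setD1K wA) -(setD1K wB) h.
have hK1 : K1 \subset K'.
  apply/subsetP=> A; rewrite !inE => /andP [/andP [AV /cliqueP cA] wA].
  apply/andP; split.
    apply/subsetP=> x xA; rewrite !inE (subsetP AV x xA) andbT.
    by apply: contraNneq wA => <-.
  apply/cliqueP=> x y xA yA xy; rewrite /e' /ctr xy /=.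
  by rewrite cA.
have hfK : [set f A | A in K2b] \subset K'.
  apply/subsetP=> B /imsetP [A AK ->].
  have [AV /cliqueP cA wA vA _] := h2bfacts A AK.
  rewrite inE; apply/andP; split.
    apply/subsetP=> x; rewrite /f !inE => /orP [/eqP ->|/andP [xw xA]].
      by rewrite vw vV.
    by rewrite xw (subsetP AV x xA).
  have key : forall y, y \in A :\ w -> e' v y.
    move=> y; rewrite !inE => /andP [yw yA].
    have yv : v != y by apply: contraNneq vA => ->.
    by rewrite /e' /ctr yv eqxx /= (cA w y wA yA) 1?orbT // eq_sym.
  apply/cliqueP=> x y; rewrite /f !inE => /orP [/eqP ->|xA] /orP [/eqP ->|yA].
  - by rewrite eqxx.
  - move=> _; apply: key; rewrite !inE; exact: yA.
  - move=> _; rewrite /e' ctr_sym //; apply: key; rewrite !inE; exact: xA.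
  - move=> xy; move: xA yA => /andP [_ xA] /andP [_ yA].
    by rewrite /e' /ctr xy cA.
have hdis : [disjoint K1 & [set f A | A in K2b]].
  rewrite -setI_eq0; apply/eqP/setP=> B; rewrite !inE; apply/negP => /andP [].
  move=> /andP [/andP [_ /cliqueP cB] _] /imsetP [A AK eB].
  have [_ _ _ _ [c cA [nevc cv]]] := h2bfacts A AK.
  move/negP: nevc; apply; apply: cB.
  - by rewrite eB /f setU11.
  - by rewrite eB /f inE cA orbT.
  - by rewrite eq_sym.
have : #|K1| + #|K2b| <= #|K'|.
  rewrite -(card_in_imset hf).
  move: (leq_card_setU K1 [set f A | A in K2b]) => /leqifP.
  rewrite hdis => /eqP <-.
  by apply: subset_leq_card; rewrite subUset hK1 hfK.
rewrite /ncl -/K -/K'; lia.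
Qed.

Lemma ncl_T e : ncl e [set: T] = num_cliques e.
Proof.
by rewrite /ncl /num_cliques; apply: eq_card => A; rewrite !inE subsetT.
Qed.

Lemma minor_T e : minor_in 5 [set: T] e -> has_K5_minor e.
Proof.
move=> [phi [h1 h2 h3 h4 h5]]; exists phi; split=> //.
Qed.

End G5.


Section G6.
Variable T : finType.
Implicit Types (e : rel T) (V : {set T}).

Lemma mainV m : forall e V, #|V| = m -> symmetric e -> irreflexive e -> 3 <= m ->
  ~ minor_in 5 V e -> ncl e V <= 8 * (m - 2).
Proof.
elim: m => [//|m IH] e V cV sym irr m3 nm.
have [m2|m4] : m = 2 \/ 3 <= m by lia.
  by have := ncl_pow e V; rewrite cV m2.
case: (boolP [exists v in V, nb e V v == set0]).
  case/exists_inP=> v vV /eqP nb0.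
  have cVv : #|V :\ v| = m by move: cV; rewrite (cardsD1 v) vV; lia.
  have := IH e (V :\ v) cVv sym irr m4
    (fun h => nm (minor_mono (subsetDl V [set v]) h)).
  have := ncl_iso vV nb0; lia.
move/exists_inPn=> noiso.
case: (boolP [exists v in V, exists w in nb e V v,
                #|nb e V v :&: nb e V w| <= 2]).
  case/exists_inP=> v vV /exists_inP [w wH Cs].
  move: (wH); rewrite inE => /andP [wV evw].
  have cV' : #|V :\ w| = m by move: cV; rewrite (cardsD1 w) wV; lia.
  have := IH (ctr e v w) (V :\ w) cV' (ctr_sym v w sym) (ctr_irr e v w) m4
    (fun h => nm (minor_ctr sym evw wV h)).
  have := ncl_ctr sym irr vV wV evw Cs; lia.
move/exists_inPn=> big.
have hC := lemC cV sym irr m3 nm.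
have [v vV dv] : exists2 v, v \in V & deg e V v < 6 by apply: low_deg; lia.
have [w0 w0H] : exists w0, w0 \in nb e V v.
  by apply/set0Pn; apply: noiso.
exfalso; apply: (nbhd_contra sym irr vV nm w0H) => [|w wH]; first lia.
have := big v vV => /exists_inPn/(_ w wH); lia.
Qed.

End G6.

Theorem theorem6 (T : finType) (e : rel T) :
  simple_graph e -> 3 <= #|T| -> ~ has_K5_minor e ->
  num_cliques e <= 8 * (#|T| - 2).
Proof.
move=> [sym irr] n3 nK.
rewrite -ncl_T -cardsT; apply: (mainV (erefl _) sym irr); first by rewrite cardsT.
by move=> h; apply: nK; apply: minor_T.
Qed.
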